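(* Let $\mathcal{C}$ be a category, $J$ a directed partially ordered set, and let $(f,f^j_\mu),(f',f'^j_\mu):\boldsymbol{X}\to\boldsymbol{Y}$ and $(g,g^j_\nu),(g',g'^j_\nu):\boldsymbol{Y}\to\boldsymbol{Z}$ be $J$-morphisms of inverse systems in $\mathcal{C}$. If $(f,f^j_\mu)\sim(f',f'^j_\mu)$ and $(g,g^j_\nu)\sim(g',g'^j_\nu)$, then $(g,g^j_\nu)(f,f^j_\mu)\sim(g',g'^j_\nu)(f',f'^j_\mu)$.
   Context: An inverse system $\boldsymbol{X}=(X_\lambda,p_{\lambda\lambda'},\Lambda)$ in $\mathcal{C}$: $\Lambda$ directed preordered, morphisms $p_{\lambda\lambda'}:X_{\lambda'}\to X_\lambda$ for $\lambda\le\lambda'$, $p_{\lambda\lambda}=1$, $p_{\lambda\lambda'}p_{\lambda'\lambda''}=p_{\lambda\lambda''}$; similarly $\boldsymbol{Y}=(Y_\mu,q_{\mu\mu'},M)$, $\boldsymbol{Z}=(Z_\nu,r_{\nu\nu'},N)$. A $J$-morphism $(f,f^j_\mu):\boldsymbol{X}\to\boldsymbol{Y}$ consists of $f:M\to\Lambda$ and $\mathcal{C}$-morphisms $f^j_\mu:X_{f(\mu)}\to Y_\mu$ ($\mu\in M$, $j\in J$) such that for all $\mu\le\mu'$ there exist $\lambda\ge f(\mu),f(\mu')$ and $j_0$ with $f^{j'}_\mu p_{f(\mu)\lambda}=q_{\mu\mu'}f^{j'}_{\mu'}p_{f(\mu')\lambda}$ for all $j'\ge j_0$. Composition: $(g,g^j_\nu)(f,f^j_\mu)=(fg,g^j_\nu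 f^j_{g(\nu)})$. $(f,f^j_\mu)\sim(f',f'^j_\mu)$ iff for every $\mu$ there exist $\lambda\ge f(\mu),f'(\mu)$ and $j_0$ with $f^{j'}_\mu p_{f(\mu)\lambda}=f'^{j'}_\mu p_{f'(\mu)\lambda}$ for all $j'\ge j_0$ (analogously for morphisms $\boldsymbol{Y}\to\boldsymbol{Z}$ and $\boldsymbol{X}\to\boldsymbol{Z}$). *)

(* Defs.v *)
Set Implicit Arguments.
Unset Strict Implicit.

Record Category := {
  Ob :> Type;
  Hom : Ob -> Ob -> Type;
  comp : forall a b c : Ob, Hom b c -> Hom a b -> Hom a c;
  idm : forall a : Ob, Hom a a;
  comp_assoc : forall a b c d (h : Hom c d) (g : Hom b c) (f : Hom a b),
      comp h (comp g f) = comp (comp h g) f;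
  comp_idl : forall a b (f : Hom a b), comp (idm b) f = f;
  comp_idr : forall a b (f : Hom a b), comp f (idm a) = f
}.
Arguments comp {_ _ _ _} _ _.
Arguments idm {_} _.

Record DirPreorder := {
  dcar :> Type;
  dle : dcar -> dcar -> Prop;
  dle_refl : forall x, dle x x;
  dle_trans : forall x y z, dle x y -> dle y z -> dle x z;
  dle_directed : forall x y, exists z, dle x z /\ dle y z
}.
Arguments dle {_} _ _.

Definition antisymmetric (D : DirPreorder) : Prop :=
  forall x y : D, dle x y -> dle y x -> x = y.

Record InvSys (C : Category) := {
  idx : DirPreorder;
  sobj : idx -> Ob C;
  bond : forall l l' : idx, dle l l' -> @Hom C (sobj l') (sobj l);
  bond_id : forall l (h : dle l l), bond h = idm (sobj l);
  bond_comp : forall l l' l'' (h1 : dle l l') (h2 : dle l' l'') (h3 : dle l l''),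
      comp (bond h1) (bond h2) = bond h3
}.
Arguments idx {C} _.
Arguments sobj {C} _ _.
Arguments bond {C} _ {l l'} _.

Record JData (C : Category) (J : DirPreorder) (X Y : InvSys C) := {
  jf : idx Y -> idx X;
  jm : forall (j : J) (mu : idx Y), @Hom C (sobj X (jf mu)) (sobj Y mu)
}.
Arguments jf {C J X Y} _ _.
Arguments jm {C J X Y} _ _ _.

Definition is_Jmor (C : Category) (J : DirPreorder) (X Y : InvSys C)
    (F : JData J X Y) : Prop :=
  forall (mu mu' : idx Y) (h : dle mu mu'),
    exists (lam : idx X) (h1 : dle (jf F mu) lam) (h2 : dle (jf F mu') lam) (j0 : J),
      forall j' : J, dle j0 j' ->
        comp (jm F j' mu) (bond X h1) =
        comp (bond Y h) (comp (jm F j' mu') (bond X h2)).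

Definition Jcomp (C : Category) (J : DirPreorder) (X Y Z : InvSys C)
    (G : JData J Y Z) (F : JData J X Y) : JData J X Z :=
  {| jf := fun nu => jf F (jf G nu);
     jm := fun j nu => comp (jm G j nu) (jm F j (jf G nu)) |}.

Definition Jequiv (C : Category) (J : DirPreorder) (X Y : InvSys C)
    (F F' : JData J X Y) : Prop :=
  forall mu : idx Y,
    exists (lam : idx X) (h1 : dle (jf F mu) lam) (h2 : dle (jf F' mu) lam) (j0 : J),
      forall j' : J, dle j0 j' ->
        comp (jm F j' mu) (bond X h1) = comp (jm F' j' mu) (bond X h2).

(* Main.v *)
Require Import Defs.

Theorem lemma4 (C : Category) (J : DirPreorder) (J_antisym : antisymmetric J)
    (X Y Z : InvSys C) (F F' : JData J X Y) (G G' : JData J Y Z)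
    (HF : is_Jmor F) (HF' : is_Jmor F') (HG : is_Jmor G) (HG' : is_Jmor G')
    (HFF' : Jequiv F F') (HGG' : Jequiv G G') :
  Jequiv (Jcomp G F) (Jcomp G' F').
Proof.
  intro nu.
  destruct (HGG' nu) as [m0 [a1 [a2 [j1 Hg]]]].
  destruct (HF _ _ a1) as [l1 [b1 [b2 [j2 Hf]]]].
  destruct (HF' _ _ a2) as [l2 [c1 [c2 [j3 Hf']]]].
  destruct (HFF' m0) as [l3 [d1 [d2 [j4 Hff]]]].
  destruct (dle_directed l1 l2) as [l12 [e1 e2]].
  destruct (dle_directed l12 l3) as [l [e12 e3]].
  destruct (dle_directed j1 j2) as [k12 [f1 f2]].
  destruct (dle_directed j3 j4) as [k34 [f3 f4]].
  destruct (dle_directed k12 k34) as [j0 [g12 g34]].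
  pose proof (dle_trans e1 e12) as E1.
  pose proof (dle_trans e2 e12) as E2.
  exists l, (dle_trans b1 E1), (dle_trans c1 E2), j0.
  intros j' hj. simpl.
  specialize (Hg j' (dle_trans f1 (dle_trans g12 hj))).
  specialize (Hf j' (dle_trans f2 (dle_trans g12 hj))).
  specialize (Hf' j' (dle_trans f3 (dle_trans g34 hj))).
  specialize (Hff j' (dle_trans f4 (dle_trans g34 hj))).
  rewrite <- (bond_comp b1 E1 (dle_trans b1 E1)).
  rewrite <- (bond_comp c1 E2 (dle_trans c1 E2)).
  rewrite <- !comp_assoc.
  rewrite (comp_assoc _ (bond X b1)), Hf.
  rewrite (comp_assoc _ (bond X c1)), Hf'.
  rewrite <- !comp_assoc.
  rewrite (bond_comp b2 E1 (dle_trans d1 e3)).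
  rewrite (bond_comp c2 E2 (dle_trans d2 e3)).
  rewrite <- (bond_comp d1 e3 (dle_trans d1 e3)).
  rewrite <- (bond_comp d2 e3 (dle_trans d2 e3)).
  rewrite (comp_assoc _ (bond X d1)), Hff.
  rewrite !comp_assoc. rewrite Hg. reflexivity.
Qed.
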